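(* For each finite set $I$, the linear map $\mathcal T:\mathbf{GP}[I]\to\mathcal R$ defined on generalized permutahedra $P\subseteq\mathbb R^I$ by $$\mathcal T(P)=\sum_{A\subseteq I}x_1^{|A|}\,y_1^{\mu_P(A)}\,x_2^{|I\setminus A|}\,y_2^{\mu_P(I)-\mu_P(A)}$$ (the universal Tutte character of $\mathbf{GP}$) is a strong valuation.
   Context: $\mathbf{GP}[I]$ is the real vector space with basis the generalized permutahedra in $\mathbb R^I$, i.e. polytopes $\{x:\sum_{i\in I}x_i=z(I),\ \sum_{i\in A}x_i\le z(A)\ \forall A\subseteq I\}$ for submodular $z:2^I\to\mathbb R$. For such $P$, $\mu_P(A)=\max_{x\in P}\sum_{i\in A}x_i$ (so $\mu_P(\emptyset)=0$). $\mathcal R$ is the real group algebra of monomials $x_1^ax_2^by_1^cy_2^d$ with $a,b\in\mathbb Z_{\ge0}$, $c,d\in\mathbb R$. A linear map $f:\mathbf{GP}[I]\to\mathcal R$ is a strong valuation if there is a linear map $\hat f$ on the span of the indicator functions $\mathbb 1_P$ of generalized permutahedra $P\subseteq\mathbb R^I$ with $f(P)=\hat f(\mathbb 1_P)$ for all $P$. *)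

(* Defs.v *)
From HB Require Import structures.
From mathcomp Require Import all_boot all_order all_algebra.
From mathcomp Require Import boolp classical_sets reals.
From mathcomp.multinomials Require Import monalg.
Set Implicit Arguments. Unset Strict Implicit. Unset Printing Implicit Defensive.
Import Order.TTheory GRing.Theory Num.Theory.
Local Open Scope ring_scope.

Section GP.
Variables (R : realType) (I : finType).

Definition pt := I -> R.

Definition submodular (z : {set I} -> R) : Prop :=
  forall A B : {set I}, z (A :|: B) + z (A :&: B) <= z A + z B.

Definition base_polytope (z : {set I} -> R) : set pt :=
  fun x => \sum_(i in [set: I]) x i = z [set: I] /\
           forall A : {set I}, \sum_(i in A) x i <= z A.

Definition is_GP (P : set pt) : Prop :=
  exists z : {set I} -> R, z (@finset.set0 I) = 0 /\ submodular z /\ P = base_polytope z.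

(* mu_P(A) = max_{x in P} sum_{i in A} x_i  (the max is attained, so = sup) *)
Definition mu (P : set pt) (A : {set I}) : R :=
  sup (fun s : R => exists2 x, P x & s = \sum_(i in A) x i).

Definition indic (P : set pt) : pt -> R := fun x => if `[< P x >] then 1 else 0.

Definition in_GP_indic_span (g : pt -> R) : Prop :=
  exists s : seq (R * set pt),
    (forall cP, cP \in s -> is_GP cP.2) /\
    g = (fun x => \sum_(cP <- s) cP.1 * indic cP.2 x).

(* monomials x1^a x2^b y1^c y2^d, coded by (a, b, c, d) *)
Definition monom := (nat * nat * R * R)%type.
(* the group algebra R, as a real vector space: finitely supported
   functions monom -> R (free R-module on the monomials) *)
Definition Ralg := {malg R[monom]}.
Definition mon (a b : nat) (c d : R) : Ralg := << ((a, b, c, d) : monom) >>.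

Definition strong_valuation (f : set pt -> Ralg) : Prop :=
  exists hatf : (pt -> R) -> Ralg,
    (forall g h, in_GP_indic_span g -> in_GP_indic_span h ->
       hatf (fun x => g x + h x) = hatf g + hatf h) /\
    (forall (c : R) g, in_GP_indic_span g ->
       hatf (fun x => c * g x) = c *: hatf g) /\
    (forall P, is_GP P -> f P = hatf (indic P)).

Definition tutte (P : set pt) : Ralg :=
  \sum_(A : {set I})
     mon #|A| #|~: A| (mu P A) (mu P [set: I] - mu P A).

End GP.

(* Main.v *)
Require Import Defs.
From HB Require Import structures.
From mathcomp Require Import all_boot all_order all_algebra.
From mathcomp Require Import boolp classical_sets reals.
From mathcomp.multinomials Require Import monalg.
From mathcomp Require Import topology normedtype derive.
Set Implicit Arguments. Unset Strict Implicit. Unset Printing Implicit Defensive.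
Import Order.TTheory GRing.Theory Num.Theory.
Local Open Scope ring_scope.
From mathcomp Require Import lra.
Import numFieldTopology.Exports.
Section FSum.
Variables (K : eqType) (V : zmodType).

Definition fsupp (f : K -> V) (s : seq K) := forall t, f t != 0 -> t \in s.

Definition fsum (f : K -> V) : V :=
  match pselect (exists s, fsupp f s) with
  | left e => \sum_(t <- undup (proj1_sig (cid e))) f t
  | right _ => 0 end.

Lemma sum_restr (f : K -> V) s1 s2 : fsupp f s2 ->
  \sum_(t <- s1) f t = \sum_(t <- seq.filter (fun t => t \in s2) s1) f t.
Proof.
move=> h; rewrite big_filter [RHS]big_mkcond; apply: eq_bigr => t _.
case tb: (t \in s2) => //; apply/eqP; by apply: contraT => /h; rewrite tb.
Qed.

Lemma sum_supp_eq (f : K -> V) s1 s2 : uniq s1 -> uniq s2 ->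
  fsupp f s1 -> fsupp f s2 -> \sum_(t <- s1) f t = \sum_(t <- s2) f t.
Proof.
move=> u1 u2 h1 h2; rewrite (sum_restr s1 h2) (sum_restr s2 h1).
apply: perm_big; apply: uniq_perm; rewrite ?filter_uniq // => t.
by rewrite !mem_filter andbC.
Qed.

Lemma fsumE (f : K -> V) s : uniq s -> fsupp f s -> fsum f = \sum_(t <- s) f t.
Proof.
move=> us hs; rewrite /fsum; case: pselect => [e|ne]; last first.
  by exfalso; apply: ne; exists s.
apply: sum_supp_eq => //; first exact: undup_uniq.
by move=> t /(proj2_sig (cid e)); rewrite mem_undup.
Qed.

Lemma fsupp_add (f g : K -> V) s1 s2 : fsupp f s1 -> fsupp g s2 ->
  fsupp (fun t => f t + g t) (s1 ++ s2).
Proof.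
move=> h1 h2 t; rewrite mem_cat; case: (boolP (f t == 0)) => [/eqP ->|/h1 ->//].
by rewrite add0r => /h2 ->; rewrite orbT.
Qed.

Lemma fsum_add (f g : K -> V) s1 s2 : fsupp f s1 -> fsupp g s2 ->
  fsum (fun t => f t + g t) = fsum f + fsum g.
Proof.
move=> h1 h2; set s := undup (s1 ++ s2).
have hf : fsupp f s by move=> t /h1; rewrite mem_undup mem_cat => ->.
have hg : fsupp g s by move=> t /h2; rewrite mem_undup mem_cat => ->; rewrite orbT.
have hfg : fsupp (fun t => f t + g t) s.
  by move=> t /(fsupp_add h1 h2); rewrite mem_undup.
rewrite (fsumE (undup_uniq _) hf) (fsumE (undup_uniq _) hg).
by rewrite (fsumE (undup_uniq _) hfg) big_split.
Qed.

Lemma eq_fsum (f g : K -> V) : f =1 g -> fsum f = fsum g.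
Proof. by move=> h; rewrite (funext h). Qed.

Lemma fsum0 : fsum (fun _ : K => (0 : V)) = 0.
Proof. by rewrite (@fsumE _ [::]) ?big_nil // => t; rewrite eqxx. Qed.

Lemma fsum_sum (T : Type) (r : seq T) (F : T -> K -> V) :
  (forall k, exists s, fsupp (F k) s) ->
  fsum (fun t => \sum_(k <- r) F k t) = \sum_(k <- r) fsum (F k).
Proof.
move=> hF.
have hs : forall r, exists s, fsupp (fun t => \sum_(k <- r) F k t) s.
  elim=> [|a r' [s' hs']]; first by exists [::] => t; rewrite big_nil eqxx.
  have [sa ha] := hF a; exists (sa ++ s') => t; rewrite big_cons.
  exact: (fsupp_add ha hs').
elim: r => [|a r' IH].
  rewrite big_nil; transitivity (fsum (fun _ : K => (0:V))); last exact: fsum0.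
  by apply: eq_fsum => t; rewrite big_nil.
have [sa ha] := hF a; have [s' hs'] := hs r'.
rewrite big_cons -IH -(fsum_add ha hs').
by apply: eq_fsum => t; rewrite big_cons.
Qed.

End FSum.

Lemma fsum_scale (K : eqType) (R : pzRingType) (V : lmodType R) (c : R)
   (f : K -> V) s : fsupp f s -> fsum (fun t => c *: f t) = c *: fsum f.
Proof.
move=> h; have h' : fsupp (fun t => c *: f t) s.
  by move=> t; case: (boolP (f t == 0)) => [/eqP ->|/h //]; rewrite scaler0 eqxx.
have hu : fsupp f (undup s) by move=> t /h; rewrite mem_undup.
have hu' : fsupp (fun t => c *: f t) (undup s) by move=> t /h'; rewrite mem_undup.
by rewrite (fsumE (undup_uniq _) hu) (fsumE (undup_uniq _) hu') scaler_sumr.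
Qed.
Section Lim.
Variable R : realType.

Definition b2r (P : Prop) : R := if `[< P >] then 1 else 0.

Lemma b2rE (P Q : Prop) : (P <-> Q) -> b2r P = b2r Q.
Proof. by move=> h; rewrite /b2r (propext h). Qed.

Lemma b2rT (P : Prop) : P -> b2r P = 1.
Proof. by move=> h; rewrite /b2r asboolT. Qed.

Lemma b2rF (P : Prop) : ~ P -> b2r P = 0.
Proof. by move=> h; rewrite /b2r asboolF. Qed.

Definition evc (f : R -> R) (t c : R) :=
  exists2 d : R, 0 < d & forall s, t < s -> s < t + d -> f s = c.

Definition limr (f : R -> R) (t : R) : R :=
  match pselect (exists c, evc f t c) with
  | left e => proj1_sig (cid e)
  | right _ => 0 end.

Lemma min_half (d d' : R) : 0 < d -> 0 < d' ->
  exists e, [/\ 0 < e, e < d & e < d'].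
Proof.
move=> d0 d'0; exists (Num.min d d' / 2).
have m0 : 0 < Num.min d d' by rewrite lt_min d0 d'0.
have m1 : Num.min d d' <= d by rewrite ge_min lexx.
have m2 : Num.min d d' <= d' by rewrite ge_min lexx orbT.
split; lra.
Qed.

Lemma evc_uniq f t c c' : evc f t c -> evc f t c' -> c = c'.
Proof.
move=> [d d0 h] [d' d'0 h']; have [e [e0 ed ed']] := min_half d0 d'0.
rewrite -(h (t + e)) ?(h' (t + e)) //; lra.
Qed.

Lemma limrE f t c : evc f t c -> limr f t = c.
Proof.
move=> H; rewrite /limr; case: pselect => [e|ne]; last first.
  by exfalso; apply: ne; exists c.
exact: (evc_uniq (proj2_sig (cid e)) H).
Qed.

Lemma evc_add f g t c1 c2 : evc f t c1 -> evc g t c2 ->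
  evc (fun s => f s + g s) t (c1 + c2).
Proof.
move=> [d d0 h] [d' d'0 h']; have [e [e0 ed ed']] := min_half d0 d'0.
exists e => // s ts se; rewrite h ?h' //; lra.
Qed.

Lemma evc_scale a f t c : evc f t c -> evc (fun s => a * f s) t (a * c).
Proof. by move=> [d d0 h]; exists d => // s ts sd; rewrite h. Qed.

Lemma evc_cst t c : evc (fun _ => c) t c.
Proof. by exists 1. Qed.

Lemma evc_sum (T : Type) (r : seq T) (F : T -> R -> R) (c : T -> R) t :
  (forall k, evc (F k) t (c k)) ->
  evc (fun s => \sum_(k <- r) F k s) t (\sum_(k <- r) c k).
Proof.
move=> h; elim: r => [|a r [d d0 IH]].
  by rewrite big_nil; exists 1 => // s _ _; rewrite big_nil.
have [d' d'0 h'] := h a; have [e [e0 ed ed']] := min_half d0 d'0.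
exists e => // s ts se; rewrite !big_cons h' ?IH //; lra.
Qed.

Definition interval_like (p : R -> Prop) :=
  (forall t, ~ p t) \/ exists lo hi, lo <= hi /\ forall t, p t <-> lo <= t <= hi.

Lemma interval1D (p : R -> Prop) : interval_like p ->
  [/\ (forall t, exists c, evc (fun s => b2r (p s)) t c),
      exists s, fsupp (fun t => b2r (p t) - limr (fun s => b2r (p s)) t) s &
      fsum (fun t => b2r (p t) - limr (fun s => b2r (p s)) t) = b2r (exists t, p t)].
Proof.
case=> [hn|[lo [hi [lh hp]]]].
  have h0 : (fun s => b2r (p s)) = (fun _ => 0).
    by apply: funext => s; rewrite b2rF.
  have hl : forall t, limr (fun s => b2r (p s)) t = 0.
    by move=> t; rewrite h0; apply: limrE; apply: evc_cst.
  have hD : forall t, b2r (p t) - limr (fun s => b2r (p s)) t = 0.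
    by move=> t; rewrite hl b2rF // subr0.
  split.
  - by move=> t; exists 0; rewrite h0; apply: evc_cst.
  - by exists [::] => t; rewrite hD eqxx.
  - rewrite (@fsumE _ _ _ [::]) ?big_nil ?b2rF //; first by move=> [t /hn].
    by move=> t; rewrite hD eqxx.
have ev : forall t, evc (fun s => b2r (p s)) t (if (lo <= t) && (t < hi) then 1 else 0).
  move=> t; case: (ltP t lo) => [tlo|lot] /=.
    exists (lo - t); first lra.
    by move=> s ts st; rewrite b2rF // hp; lra.
  case: (ltP t hi) => [thi|hit].
    exists (hi - t); first lra.
    by move=> s ts st; rewrite b2rT // hp; lra.
  exists 1 => // s ts st; rewrite b2rF // hp; lra.
have hD : forall t, b2r (p t) - limr (fun s => b2r (p s)) t = if t == hi then 1 else 0.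
  move=> t; rewrite (limrE (ev t)).
  case: (ltP t lo) => [tlo|lot] /=.
    have -> : (t == hi) = false by apply/eqP; lra.
    by rewrite b2rF ?subr0 // hp; lra.
  case: (ltP t hi) => [thi|hit].
    have -> : (t == hi) = false by apply/eqP; lra.
    by rewrite b2rT ?subrr // hp; lra.
  case: (eqVneq t hi) => [->|nth].
    by rewrite b2rT ?subr0 // hp; lra.
  have : hi < t by rewrite lt_neqAle eq_sym nth hit.
  by move=> ht; rewrite b2rF ?subr0 // hp; lra.
have hs : fsupp (fun t => b2r (p t) - limr (fun s => b2r (p s)) t) [:: hi].
  by move=> t; rewrite hD inE; case: (t == hi); rewrite ?eqxx.
split.
- by move=> t; eexists; apply: ev.
- by exists [:: hi].
- rewrite (fsumE _ hs) // big_seq1 hD eqxx b2rT //.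
  by exists hi; rewrite hp; lra.
Qed.

End Lim.
Arguments b2r {R}.
Arguments b2rE {R}.
Arguments b2rT {R}.
Arguments b2rF {R}.
Section Chi.
Variables (R : realType) (I : finType).
Local Notation pt := (I -> R).

Lemma fsum_mulr (K : eqType) (c : R) (f : K -> R) s :
  fsupp f s -> fsum (fun t => c * f t) = c * fsum f.
Proof.
move=> h; have h' : fsupp (fun t => c * f t) s.
  by move=> t; case: (boolP (f t == 0)) => [/eqP ->|/h //]; rewrite mulr0 eqxx.
have hu : fsupp f (undup s) by move=> t /h; rewrite mem_undup.
have hu' : fsupp (fun t => c * f t) (undup s) by move=> t /h'; rewrite mem_undup.
by rewrite (fsumE (undup_uniq _) hu) (fsumE (undup_uniq _) hu') mulr_sumr.
Qed.

Lemma mem_tl (T : eqType) (a k : T) (r : seq T) : k \in r -> k \in a :: r.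
Proof. by move=> kr; rewrite inE kr orbT. Qed.

Lemma fsum_sum_in (K T : eqType) (V : zmodType) (r : seq T) (F : T -> K -> V) :
  (forall k, k \in r -> exists s, fsupp (F k) s) ->
  fsum (fun t => \sum_(k <- r) F k t) = \sum_(k <- r) fsum (F k).
Proof.
elim: r => [|a r IH] hF.
  rewrite big_nil; transitivity (fsum (fun _ : K => (0:V))); last exact: fsum0.
  by apply: eq_fsum => t; rewrite big_nil.
have hs : forall r', (forall k, k \in r' -> exists s, fsupp (F k) s) ->
   exists s, fsupp (fun t => \sum_(k <- r') F k t) s.
  elim=> [|b r' IH'] h'; first by exists [::] => t; rewrite big_nil eqxx.
  have [sb hb] := h' b (mem_head _ _).
  have [s' hs'] := IH' (fun k kr => h' k (mem_tl _ kr)).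
  by exists (sb ++ s') => t; rewrite big_cons; exact: (fsupp_add hb hs').
have [sa ha] := hF a (mem_head _ _).
have hr : forall k, k \in r -> exists s, fsupp (F k) s.
  by move=> k kr; apply: hF; rewrite inE kr orbT.
have [s' hs'] := hs r hr.
rewrite big_cons -(IH hr) -(fsum_add ha hs').
by apply: eq_fsum => t; rewrite big_cons.
Qed.

Lemma evc_sum_in (T : eqType) (r : seq T) (F : T -> R -> R) (c : T -> R) t :
  (forall k, k \in r -> evc (F k) t (c k)) ->
  evc (fun s => \sum_(k <- r) F k s) t (\sum_(k <- r) c k).
Proof.
elim: r => [|a r IH] h.
  by rewrite big_nil; exists 1 => // s _ _; rewrite big_nil.
have [d d0 hd] := IH (fun k kr => h k (mem_tl _ kr)).
have [d' d'0 h'] := h a (mem_head _ _); have [e [e0 ed ed']] := min_half d0 d'0.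
exists e => // s ts se; rewrite !big_cons h' ?hd //; lra.
Qed.

Definition upd (x : pt) (i : I) (t : R) : pt := fun j => if j == i then t else x j.

Fixpoint chiL (L : seq I) (g : pt -> R) (x : pt) : R :=
  match L with
  | [::] => g x
  | i :: L' => fsum (fun t => chiL L' g (upd x i t)
                              - limr (fun s => chiL L' g (upd x i s)) t)
  end.

Definition fib (Q : set pt) (L : seq I) (x : pt) :=
  exists2 y, Q y & forall j, j \notin L -> y j = x j.

Definition good (Q : set pt) := forall L x i, i \notin L ->
  interval_like (fun t => fib Q L (upd x i t)).

Lemma fib_cons Q i L x : i \notin L ->
  (fib Q (i :: L) x <-> exists t, fib Q L (upd x i t)).
Proof.
move=> iL; split.
  move=> [y Qy hy]; exists (y i); exists y => // j jL; rewrite /upd.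
  case: eqP => [->//|/eqP ji]; apply: hy; by rewrite inE negb_or ji jL.
move=> [t [y Qy hy]]; exists y => // j; rewrite inE negb_or => /andP [ji jL].
by rewrite hy // /upd (negbTE ji).
Qed.

Lemma chiL_lin (L : seq I) (r : seq (R * set pt)) (x : pt) : uniq L ->
  (forall k, k \in r -> good k.2) ->
  chiL L (fun y => \sum_(k <- r) k.1 * indic k.2 y) x =
  \sum_(k <- r) k.1 * b2r (fib k.2 L x).
Proof.
move=> + hg; elim: L x => [|i L IH] x /=.
  move=> _; apply: eq_bigr => k _; congr (_ * _); rewrite /indic -/(b2r _).
  apply: b2rE; split; first by move=> h; exists x.
  by move=> [y Qy hy]; have <- : y = x by apply: funext => j; apply: hy.
move=> /andP [iL uL].
set G := (fun y : pt => \sum_(k <- r) k.1 * indic k.2 y).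
have hIH : forall t, chiL L G (upd x i t) =
    \sum_(k <- r) k.1 * b2r (fib k.2 L (upd x i t)) by move=> t; exact: IH.
have hint := fun k (kr : k \in r) => interval1D (hg k kr L x i iL).
have hlim : forall t, limr (fun s => chiL L G (upd x i s)) t =
    \sum_(k <- r) k.1 * limr (fun s => b2r (fib k.2 L (upd x i s))) t.
  move=> t; rewrite (funext hIH); apply: limrE; apply: evc_sum_in => k kr.
  apply: evc_scale; have [hev _ _] := hint k kr; have [c hc] := hev t.
  by rewrite (limrE hc).
have hsum : (fun t => chiL L G (upd x i t) - limr (fun s => chiL L G (upd x i s)) t)
  = (fun t => \sum_(k <- r) k.1 * (b2r (fib k.2 L (upd x i t))
              - limr (fun s => b2r (fib k.2 L (upd x i s))) t)).
  apply: funext => t; rewrite hIH hlim -sumrB; apply: eq_bigr => k _.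
  by rewrite mulrBr.
rewrite hsum fsum_sum_in; last first.
  move=> k kr; have [_ [s hs] _] := hint k kr; exists s => t /=.
  by rewrite mulf_eq0 negb_or => /andP [_ /hs].
rewrite big_seq [RHS]big_seq; apply: eq_bigr => k kr.
have [_ [s hs] hf] := hint k kr.
rewrite (fsum_mulr _ hs) hf; congr (_ * _); apply: b2rE; split.
  by move=> [t ht]; apply/fib_cons => //; exists t.
by move/(fib_cons _ _ iL).
Qed.
End Chi.
Section Topo.
Local Open Scope classical_set_scope.
Variables (R : realType) (I : finType).
Local Notation pt := (I -> R).
Definition Rt : topologicalType := Topological.clone R _.
Definition TT : topologicalType := @prod_topology I (fun _ => Rt).

Definition phi (A : {set I}) (y : pt) : R := \sum_(i in A) y i.

Lemma phi_cont A : continuous (fun y : TT => phi A y).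
Proof.
rewrite /phi; elim: (index_enum I) => [|i r IH].
  move=> x; rewrite (_ : (fun y : TT => _) = fun _ => 0).
    exact: cst_continuous.
  by apply: funext => y; rewrite big_nil.
case iA: (i \in A).
  rewrite (_ : (fun y : TT => _) = (fun y : TT => y i + \sum_(j <- r | j \in A) y j)).
    move=> x.
    have := @continuousD R R^o TT (fun y : TT => y i) (fun y : TT => \sum_(j <- r | j \in A) y j) x.
    by apply; [exact: proj_continuous|exact: IH].
  by apply: funext => y; rewrite big_cons iA.
rewrite (_ : (fun y : TT => _) = (fun y : TT => \sum_(j <- r | j \in A) y j)) //.
by apply: funext => y; rewrite big_cons iA.
Qed.

Lemma closed_pre A (P : set R) : closed P -> closed [set y : TT | P (phi A y)].
Proof.
by move=> cP; exact: ((continuous_closedP (fun y : TT => phi A y)).1 (@phi_cont A) P cP).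
Qed.

Definition Qs (z : {set I} -> R) (A : {set I}) (a b : R) : set pt :=
  fun y => base_polytope z y /\ a <= phi A y /\ phi [set: I]%SET y = b.

Lemma Qs_closed z A a b : closed (Qs z A a b : set TT).
Proof.
have -> : (Qs z A a b : set TT) = [set y : TT | phi [set: I]%SET y = z [set: I]%SET] `&`
   (\bigcap_(B in setT) [set y : TT | phi B y <= z B]) `&`
   [set y : TT | a <= phi A y] `&` [set y : TT | phi [set: I]%SET y = b].
  apply/seteqP; split => y /=.
    by move=> [[h1 h2] [h3 h4]]; do !split => //; move=> B _; apply: h2.
  by move=> [[[h1 h2] h3] h4]; do !split => //; move=> B; apply: h2.
apply: closedI; last exact: (@closed_pre _ [set x | x = b] (closed_eq (y:=b))).
apply: closedI; last exact: (@closed_pre _ [set x | a <= x] (closed_ge (y:=a))).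
apply: closedI; first exact: (@closed_pre _ [set x | x = z [set: I]%SET] (closed_eq (y:=_))).
by apply: closed_bigI => B _; exact: (@closed_pre _ [set x | x <= z B] (closed_le (y:=_))).
Qed.

Definition lo (z : {set I} -> R) (i : I) : R :=
  z [set: I]%SET - \sum_(k in [set: I]%SET | k != i) z [set k]%SET.
Definition hi (z : {set I} -> R) (i : I) : R := z [set i]%SET.

Lemma bp_bounds z y i : base_polytope z y -> lo z i <= y i <= hi z i.
Proof.
move=> [h1 h2]; have hi' : y i <= hi z i.
  by have := h2 [set i]%SET; rewrite big_set1.
have hs : \sum_(k in [set: I]%SET | k != i) y k <= \sum_(k in [set: I]%SET | k != i) z [set k]%SET.
  apply: ler_sum => k _; by have := h2 [set k]%SET; rewrite big_set1.
have := h1; rewrite (bigD1 i) ?inE //= => h1'.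
rewrite hi' andbT /lo; lra.
Qed.

Lemma Qs_compact z A a b : compact (Qs z A a b : set TT).
Proof.
have cb := @tychonoff I (fun _ => Rt) (fun i => `[lo z i, hi z i]) (fun i => @segment_compact R _ _).
have := compact_closedI cb (@Qs_closed z A a b).
rewrite setIidr // => y [hb _] i; have := bp_bounds i hb.
by rewrite /= in_itv /=.
Qed.

Definition cvx (Q : set pt) := forall y1 y2 (l : R), Q y1 -> Q y2 -> 0 <= l <= 1 ->
  Q (fun j => y1 j + l * (y2 j - y1 j)).

Lemma phi_comb B (y1 y2 : pt) l :
  phi B (fun j => y1 j + l * (y2 j - y1 j)) = phi B y1 + l * (phi B y2 - phi B y1).
Proof. by rewrite /phi big_split /= -mulr_sumr sumrB. Qed.

Lemma Qs_cvx z A a b : cvx (Qs z A a b).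
Proof.
move=> y1 y2 l [[e1 h1] [a1 b1]] [[e2 h2] [a2 b2]] /andP [l0 l1].
have E1 : phi [set: I]%SET y1 = z [set: I]%SET := e1.
have E2 : phi [set: I]%SET y2 = z [set: I]%SET := e2.
split; [split|split].
- change (phi [set: I]%SET (fun j => y1 j + l * (y2 j - y1 j)) = z [set: I]%SET).
  by rewrite phi_comb E1 E2 subrr mulr0 addr0.
- move=> B; change (phi B (fun j => y1 j + l * (y2 j - y1 j)) <= z B).
  have H1 : phi B y1 <= z B := h1 B.
  have H2 : phi B y2 <= z B := h2 B.
  rewrite phi_comb; nra.
- rewrite phi_comb; nra.
- by rewrite phi_comb b1 b2 subrr mulr0 addr0.
Qed.

Lemma good_of_cc (Q : set pt) : cvx Q -> compact (Q : set TT) -> good Q.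
Proof.
move=> cQ kQ L x i iL.
set C := [set y : TT | forall j, j \notin L -> j != i -> y j = x j].
have cC : closed C.
  have -> : C = \bigcap_(j in setT) [set y : TT | j \notin L -> j != i -> y j = x j].
    by apply/seteqP; split => y /= h j; [move=> _|]; apply: h.
  apply: closed_bigI => j _.
  case: (boolP ((j \notin L) && (j != i))) => [/andP [h1 h2]|h].
    have -> : [set y : TT | j \notin L -> j != i -> y j = x j] =
       (mathcomp_extra.proj j : TT -> Rt) @^-1` [set r | r = x j].
      by apply/seteqP; split => y /=; [move=> h; apply: h|move=> h _ _].
    exact: ((continuous_closedP (mathcomp_extra.proj j : TT -> Rt)).1 (@proj_continuous _ _ j) _ (closed_eq (y := x j))).
  have -> : [set y : TT | j \notin L -> j != i -> y j = x j] = setT.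
    apply/seteqP; split => y //= _ h1 h2; by rewrite h1 h2 in h.
  exact: closedT.
set F : set TT := (Q : set TT) `&` C.
have kF : compact F := compact_closedI kQ cC.
have hfib : forall t, fib Q L (upd x i t) <-> exists2 y, F y & y i = t.
  move=> t; split.
    move=> [y Qy hy]; exists y; last by rewrite hy // /upd eqxx.
    by split => // j jL ji; rewrite hy // /upd (negbTE ji).
  move=> [y [Qy Cy] yi]; exists y => // j jL; rewrite /upd.
  by case: eqP => [->//|/eqP ji]; exact: Cy.
case: (pselect (F !=set0)) => [Fn|Fe]; last first.
  by left => t /hfib [y Fy _]; apply: Fe; exists y.
right.
have cont : {within F, continuous (mathcomp_extra.proj i : TT -> Rt)}.
  apply: continuous_subspaceT => y; exact: proj_continuous.
have [yh yhF yhmax] := compact_EVT_max Fn kF cont.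
have [yl ylF ylmin] := compact_EVT_min Fn kF cont.
exists (yl i), (yh i); split; first exact: (ylmin yh yhF).
move=> t; split.
  move/hfib => [y Fy <-].
  by rewrite (ylmin y (mem_set Fy)) (yhmax y (mem_set Fy)).
move=> /andP [lt th]; apply/hfib.
have [Ql Cl] := set_mem ylF; have [Qh Ch] := set_mem yhF.
case: (eqVneq (yh i) (yl i)) => e.
  by exists yl; [split|apply: le_anti; rewrite lt -e th].
have d0 : 0 < yh i - yl i.
  rewrite subr_gt0 lt_neqAle eq_sym e andTb; exact: (ylmin yh yhF).
set l := (t - yl i) / (yh i - yl i).
have l0 : 0 <= l by apply: divr_ge0; [rewrite subr_ge0|exact: ltW].
have l1 : l <= 1 by rewrite ler_pdivrMr // mul1r; lra.
exists (fun j => yl j + l * (yh j - yl j)).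
  split; first by apply: cQ => //; rewrite l0 l1.
  by move=> j jL ji /=; rewrite Cl // Ch // subrr mulr0 addr0.
rewrite /l divfK; first by rewrite addrC subrK.
by rewrite subr_eq0.
Qed.
End Topo.
Section GPfacts.
Local Open Scope classical_set_scope.
Variables (R : realType) (I : finType).
Local Notation pt := (I -> R).

Lemma greedy (z : {set I} -> R) : z (@finset.set0 I) = 0 -> submodular z ->
  forall S : {set I}, exists y : pt, \sum_(i in S) y i = z S /\
     forall A, \sum_(i in A :&: S) y i <= z (A :&: S).
Proof.
move=> z0 sz S; have [n hn] : exists n, #|S| = n by exists #|S|.
elim: n S hn => [|n IH] S hn.
  have -> : S = finset.set0 by apply/eqP; rewrite -cards_eq0 hn.
  exists (fun _ => 0); split; first by rewrite big_set0 z0.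
  by move=> A; rewrite finset.setI0 big_set0 z0.
have [j jS] : exists j, j \in S.
  by apply/finset.set0Pn; rewrite -card_gt0 hn.
set S' := S :\ j.
have hn' : #|S'| = n by move: hn; rewrite (cardsD1 j S) jS add1n => -[].
have [y' [e' h']] := IH S' hn'.
exists (fun k => if k == j then z S - z S' else y' k).
have eqS : forall B : {set I}, j \notin B -> \sum_(i in B) (if i == j then z S - z S' else y' i) = \sum_(i in B) y' i.
  move=> B jB; apply: eq_bigr => i iB; case: eqP => // ij.
  by move: jB; rewrite -ij iB.
have jS' : j \notin S' by rewrite !inE eqxx.
split.
  rewrite (big_setD1 j jS) /= eqxx eqS // e'; lra.
move=> A; case jA: (j \in A).
  have jAS : j \in A :&: S by rewrite inE jA jS.
  have e1 : (A :&: S) :\ j = A :&: S'.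
    by apply/setP => k; rewrite !inE; case: (k == j); case: (k \in A); case: (k \in S).
  have e2 : (A :&: S) :|: S' = S.
    apply/setP => k; rewrite !inE; case: eqP => [->|]; first by rewrite jA jS.
    by case: (k \in A); case: (k \in S).
  have e3 : (A :&: S) :&: S' = A :&: S'.
    by apply/setP => k; rewrite !inE; case: (k == j); case: (k \in A); case: (k \in S).
  rewrite (big_setD1 j jAS) /= eqxx e1 eqS; last by rewrite finset.in_setI (negbTE jS') andbF.
  have := sz (A :&: S) S'; rewrite e2 e3 => hs.
  have := h' A; lra.
have e1 : A :&: S = A :&: S'.
  apply/setP => k; rewrite !inE; case: eqP => [->|]; first by rewrite jA.
  by case: (k \in A); case: (k \in S).
rewrite e1 eqS; last by rewrite finset.in_setI (negbTE jS') andbF.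
exact: h'.
Qed.

Lemma bp_nonempty (z : {set I} -> R) : z (@finset.set0 I) = 0 -> submodular z ->
  exists y : pt, base_polytope z y.
Proof.
move=> z0 sz; have [y [e h]] := greedy z0 sz [set: I]%SET.
by exists y; split => // A; have := h A; rewrite finset.setIT.
Qed.


Lemma Pcompact (z : {set I} -> R) : compact (base_polytope z : set (TT R I)).
Proof.
have -> : (base_polytope z : set (TT R I)) = Qs z [set: I]%SET (z [set: I]%SET) (z [set: I]%SET).
  apply/seteqP; split => y /=; last by move=> [].
  by move=> [e h]; split; [split|split] => //; rewrite /phi e.
exact: Qs_compact.
Qed.

Lemma mu_att (P : set pt) (A : {set I}) : is_GP P ->
  exists2 y, P y & mu P A = phi A y /\ (forall y', P y' -> phi A y' <= phi A y).
Proof.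
move=> [z [z0 [sz ->]]].
have [y0 hy0] := bp_nonempty z0 sz.
have Fn : (base_polytope z : set (TT R I)) !=set0 by exists y0.
have cont : {within (base_polytope z : set (TT R I)), continuous (fun y : TT R I => phi A y)}.
  by apply: continuous_subspaceT; exact: phi_cont.
have [y yP ymax] := compact_EVT_max Fn (@Pcompact z) cont.
have ub : forall x, base_polytope z x -> phi A x <= phi A y.
  by move=> x xP; apply: ymax; exact: mem_set.
exists y; first exact: set_mem yP.
split => //; apply: le_anti; apply/andP; split.
  apply: ge_sup; first by exists (phi A y0), y0.
  by move=> s [x xP ->]; exact: ub.
apply: sup_upper_bound; last by exists y => //; exact: set_mem yP.
split; first by exists (phi A y0), y0.
by exists (phi A y) => s [x xP ->]; exact: ub.
Qed.

Lemma keyGP (P : set pt) A a b : is_GP P ->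
  ((exists y, P y /\ (a <= phi A y /\ phi [set: I]%SET y = b)) <->
   (a <= mu P A /\ b = mu P [set: I]%SET)).
Proof.
move=> gp; have [yA PyA [muA maxA]] := @mu_att P A gp.
have [yT PyT [muT maxT]] := @mu_att P [set: I]%SET gp.
have cst : forall y, P y -> phi [set: I]%SET y = mu P [set: I]%SET.
  have [z [z0 [sz eP]]] := gp.
  move=> y Py; rewrite muT; rewrite eP in Py PyT.
  by have [e1 _] := Py; have [e2 _] := PyT; rewrite /phi e1 e2.
split.
  move=> [y [Py [ay yb]]]; split; first by rewrite muA; exact: le_trans ay (maxA y Py).
  by rewrite -yb cst.
move=> [am bm]; exists yA; split => //; split; first by rewrite -muA.
by rewrite bm cst.
Qed.
End GPfacts.
Section Main.
Variables (R : realType) (I : finType).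
Local Notation pt := (I -> R).

Definition chi (g : pt -> R) : R := chiL (enum I) g (fun _ => 0).
Definition Hs (A : {set I}) (a b : R) : set pt :=
  fun y => a <= phi A y /\ phi [set: I]%SET y = b.
Definition coef (g : pt -> R) (A : {set I}) (ab : R * R) : R :=
  chi (fun y => g y * b2r (Hs A ab.1 ab.2 y))
  - limr (fun s => chi (fun y => g y * b2r (Hs A s ab.2 y))) ab.1.
Definition hatT (g : pt -> R) : Ralg R :=
  \sum_(A : {set I}) fsum (fun ab : R * R =>
      coef g A ab *: mon #|A| #|~: A| ab.1 (ab.2 - ab.1)).

Lemma b2rM (P Q : Prop) : b2r (P /\ Q) = b2r P * b2r Q :> R.
Proof.
have [p|p] := pselect P; have [q|q] := pselect Q.
- by rewrite !b2rT // mulr1.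
- by rewrite (b2rF _ q) mulr0 b2rF // => -[].
- by rewrite (b2rF _ p) mul0r b2rF // => -[].
- by rewrite (b2rF _ p) mul0r b2rF // => -[].
Qed.

Lemma fib_all (Q : set pt) x : fib Q (enum I) x <-> exists y, Q y.
Proof.
split; first by move=> [y Qy _]; exists y.
by move=> [y Qy]; exists y => // j; rewrite mem_enum.
Qed.

Lemma chi_comb (r : seq (R * set pt)) A a b : (forall k, k \in r -> is_GP k.2) ->
  chi (fun y => (\sum_(k <- r) k.1 * indic k.2 y) * b2r (Hs A a b y)) =
  \sum_(k <- r) k.1 * b2r (a <= mu k.2 A /\ b = mu k.2 [set: I]%SET).
Proof.
move=> hr.
set r' := map (fun k : R * set pt => (k.1, fun y => k.2 y /\ Hs A a b y)) r.
have -> : (fun y => (\sum_(k <- r) k.1 * indic k.2 y) * b2r (Hs A a b y)) =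
          (fun y => \sum_(k <- r') k.1 * indic k.2 y).
  apply: funext => y; rewrite big_map mulr_suml; apply: eq_bigr => k _ /=.
  change (k.1 * b2r (k.2 y) * b2r (Hs A a b y) = k.1 * b2r (k.2 y /\ Hs A a b y)).
  by rewrite b2rM mulrA.
rewrite /chi chiL_lin ?enum_uniq //; last first.
  move=> k' /mapP [k kr ->] /=; have [z [z0 [sz eP]]] := hr k kr; rewrite eP.
  change (good (Qs z A a b)); apply: good_of_cc; [exact: Qs_cvx|exact: Qs_compact].
rewrite /r' big_map big_seq [RHS]big_seq; apply: eq_bigr => k kr /=; congr (_ * _).
apply: b2rE; apply: iff_trans (fib_all _ _) _; exact: keyGP (hr k kr).
Qed.

Lemma evc_le (m : R) (q : Prop) a :
  evc (fun s => b2r (s <= m /\ q)) a (b2r (a < m /\ q)).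
Proof.
case: (ltP a m) => am.
  exists (m - a); first lra.
  move=> s hs1 hs2; apply: b2rE; split => -[h1 h2]; split => //; lra.
exists 1 => // s hs1 _; rewrite !b2rF // => -[h _]; lra.
Qed.

Lemma diff_b2r (a m b c : R) :
  b2r (a <= m /\ b = c) - b2r (a < m /\ b = c) = b2r ((a, b) = (m, c)) :> R.
Proof.
have pe : (a, b) = (m, c) -> a = m /\ b = c by case.
have [e|ne] := eqVneq b c; last first.
  rewrite (b2rF (a <= m /\ b = c)); last by case => _ h; rewrite h eqxx in ne.
  rewrite (b2rF (a < m /\ b = c)); last by case => _ h; rewrite h eqxx in ne.
  rewrite (b2rF ((a, b) = (m, c))) ?subrr // => /pe [_ h]; by rewrite h eqxx in ne.
have [h|h] := pselect (a < m).
  rewrite (b2rT (a <= m /\ b = c)); last by split => //; exact: ltW.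
  rewrite (b2rT (a < m /\ b = c)) // (b2rF ((a, b) = (m, c))) ?subrr //.
  by move=> /pe [h1 _]; move: h; rewrite h1 ltxx.
have [h'|h'] := pselect (a = m).
  rewrite (b2rT (a <= m /\ b = c)); last by split => //; rewrite h'.
  rewrite (b2rF (a < m /\ b = c)); last by case.
  by rewrite (b2rT ((a, b) = (m, c))) ?subr0 // h' e.
have hma : m < a.
  rewrite lt_neqAle; apply/andP; split; first by apply/eqP => e'; apply: h'.
  by rewrite leNgt; apply/negP.
rewrite (b2rF (a <= m /\ b = c)); last by case => h1; move: hma; rewrite ltNge h1.
rewrite (b2rF (a < m /\ b = c)); last by case.
by rewrite (b2rF ((a, b) = (m, c))) ?subrr // => /pe [h1 _].
Qed.

Lemma coefE (r : seq (R * set pt)) A ab : (forall k, k \in r -> is_GP k.2) ->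
  coef (fun x => \sum_(k <- r) k.1 * indic k.2 x) A ab =
  \sum_(k <- r) k.1 * b2r (ab = (mu k.2 A, mu k.2 [set: I]%SET)).
Proof.
move=> hr; rewrite /coef chi_comb //.
have -> : (fun s => chi (fun y => (\sum_(k <- r) k.1 * indic k.2 y) * b2r (Hs A s ab.2 y)))
   = (fun s => \sum_(k <- r) k.1 * b2r (s <= mu k.2 A /\ ab.2 = mu k.2 [set: I]%SET)).
  by apply: funext => s; exact: chi_comb.
rewrite (@limrE _ _ _ (\sum_(k <- r) k.1 * b2r (ab.1 < mu k.2 A /\ ab.2 = mu k.2 [set: I]%SET))); last first.
  by apply: evc_sum => k; apply: evc_scale; apply: evc_le.
rewrite -sumrB; apply: eq_bigr => k _; rewrite -mulrBr diff_b2r.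
by case: ab.
Qed.

Lemma fsum_term (r : seq (R * set pt)) A : (forall k, k \in r -> is_GP k.2) ->
  fsum (fun ab : R * R => coef (fun x => \sum_(k <- r) k.1 * indic k.2 x) A ab
          *: mon #|A| #|~: A| ab.1 (ab.2 - ab.1)) =
  \sum_(k <- r) k.1 *: mon #|A| #|~: A| (mu k.2 A) (mu k.2 [set: I]%SET - mu k.2 A).
Proof.
move=> hr.
rewrite (@eq_fsum _ _ _ (fun ab : R * R => \sum_(k <- r)
   (k.1 * b2r (ab = (mu k.2 A, mu k.2 [set: I]%SET))) *: mon #|A| #|~: A| ab.1 (ab.2 - ab.1))); last first.
  by move=> ab; rewrite coefE // scaler_suml.
rewrite (@fsum_sum _ _ _ r (fun k (ab : R * R) => (k.1 * b2r (ab = (mu k.2 A, mu k.2 [set: I]%SET)))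
   *: mon #|A| #|~: A| ab.1 (ab.2 - ab.1))); last first.
  move=> k; exists [:: (mu k.2 A, mu k.2 [set: I]%SET)] => ab /=.
  rewrite inE; case: (eqVneq ab (mu k.2 A, mu k.2 [set: I]%SET)) => // ne.
  have -> : b2r (ab = (mu k.2 A, mu k.2 [set: I]%SET)) = 0 :> R.
    by apply: b2rF => e; rewrite e eqxx in ne.
  by rewrite mulr0 scale0r eqxx.
apply: eq_bigr => k _.
set p := (mu k.2 A, mu k.2 [set: I]%SET).
have sp : fsupp (fun ab : R * R => (k.1 * b2r (ab = p)) *: mon #|A| #|~: A| ab.1 (ab.2 - ab.1)) [:: p].
  move=> ab; rewrite inE; case: (eqVneq ab p) => // ne.
  have -> : b2r (ab = p) = 0 :> R by apply: b2rF => e; rewrite e eqxx in ne.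
  by rewrite mulr0 scale0r eqxx.
have u : uniq [:: p] by [].
rewrite (fsumE u sp) big_seq1 (b2rT (p = p) erefl) mulr1.
by rewrite /p.
Qed.

Lemma hatT_rep (r : seq (R * set pt)) : (forall k, k \in r -> is_GP k.2) ->
  hatT (fun x => \sum_(k <- r) k.1 * indic k.2 x) = \sum_(k <- r) k.1 *: tutte k.2.
Proof.
move=> hr; rewrite /hatT.
rewrite (eq_bigr (fun A : {set I} => \sum_(k <- r) k.1 *: mon #|A| #|~: A| (mu k.2 A)
   (mu k.2 [set: I]%SET - mu k.2 A))); last by move=> A _; exact: fsum_term.
rewrite exchange_big; apply: eq_bigr => k _.
rewrite /tutte scaler_sumr.
reflexivity.
Qed.

End Main.

Theorem theorem6p4 (R : realType) (I : finType) :
  strong_valuation (@tutte R I).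
Proof.
exists (@hatT R I); split; [|split].
- move=> g h [s1 [h1 e1]] [s2 [h2 e2]].
  have hc : forall k, k \in s1 ++ s2 -> is_GP k.2.
    by move=> k; rewrite mem_cat => /orP [/h1|/h2].
  have -> : (fun x => g x + h x) = (fun x => \sum_(cP <- s1 ++ s2) cP.1 * indic cP.2 x).
    by apply: funext => x; rewrite e1 e2 big_cat.
  rewrite e1 e2 (hatT_rep hc) (hatT_rep h1) (hatT_rep h2) big_cat.
  reflexivity.
- move=> c g [s [hs e]].
  set s' := map (fun k : R * set (I -> R) => (c * k.1, k.2)) s.
  have -> : (fun x => c * g x) = (fun x => \sum_(k <- s') k.1 * indic k.2 x).
    apply: funext => x; rewrite e /s' big_map mulr_sumr; apply: eq_bigr => k _.
    by rewrite mulrA.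
  have hs' : forall k, k \in s' -> is_GP k.2 by move=> k /mapP [k0 k0s ->]; exact: (hs k0 k0s).
  rewrite (hatT_rep hs') e (hatT_rep hs) /s' big_map scaler_sumr; apply: eq_bigr => k _.
  by rewrite scalerA.
- move=> P gp.
  have -> : indic P = (fun x => \sum_(k <- [:: (1, P)]) k.1 * indic k.2 x).
    by apply: funext => x; rewrite big_seq1 mul1r.
  have hk : forall k : R * set (I -> R), k \in [:: ((1 : R), P)] -> is_GP k.2.
    by move=> k; rewrite mem_seq1 => /eqP ->.
  rewrite (hatT_rep hk) big_seq1 scale1r.
  reflexivity.
Qed.
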